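(* Let $\rho_{AB}$ be an arbitrary two-qubit state, $\rho_A=\operatorname{Tr}_B[\rho_{AB}]$, $\rho_B=\operatorname{Tr}_A[\rho_{AB}]$, $\mu_1,\mu_2\in[0,\tfrac{1}{\sqrt3}]$, and $\tau^1_{AB}=\mu_1\rho_{AB}+(1-\mu_1)\rho_A\otimes\tfrac{\mathbb{I}}{2}$, $\tau^2_{AB}=\mu_2\rho_{AB}+(1-\mu_2)\tfrac{\mathbb{I}}{2}\otimes\rho_B$. If the partial transpose of $\tau^1_{AB}$ has at least one negative eigenvalue, then $\rho_{AB}$ is EPR steerable from Bob to Alice. If the partial transpose of $\tau^2_{AB}$ has at least one negative eigenvalue, then $\rho_{AB}$ is EPR steerable from Alice to Bob.
   Context: $\mathbb{I}$ is the $2\times2$ identity. Partial transpose means $(\mathrm{id}\otimes T)$ applied to the two-qubit operator, with $T$ the transpose in the computational basis. EPR steerability: $\rho_{AB}$ is NOT EPR steerable from Bob to Alice iff there exist $P(\lambda)$, quantum states $\rho^A_\lambda$ of Alice, and arbitrary distributions $P(b|B,\lambda)$ such that for all POVM measurements $A=\{M^A_a\}$ of Alice, $B=\{M^B_b\}$ of Bob and all outcomes, $\operatorname{Tr}[(M^A_a\otimes M^B_b)\rho_{AB}]=\sum_\lambda P(\lambda)\operatorname{Tr}[\rho^A_\lambda M^A_a]P(b|B,\lambda)$; otherwise it is steerable from Bob to Alice. Steerability from Alice to Bob is defined symmetrically, with Bob's side given by quantum states $\rho^B_\lambda$ and Alice's side by arbitrary distributions $P(a|A,\lambda)$. *)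

(* Defs.v *)
From Stdlib Require Import Reals.
Open Scope R_scope.

Record C := mkC { Re : R; Im : R }.
Definition RtoC (x : R) : C := mkC x 0.
Definition C0 : C := RtoC 0.
Definition C1 : C := RtoC 1.
Definition Cadd (z w : C) : C := mkC (Re z + Re w) (Im z + Im w).
Definition Cmul (z w : C) : C :=
  mkC (Re z * Re w - Im z * Im w) (Re z * Im w + Im z * Re w).
Definition Cconj (z : C) : C := mkC (Re z) (- Im z).

Fixpoint Csum (n : nat) (f : nat -> C) : C :=
  match n with O => C0 | S m => Cadd (Csum m f) (f m) end.

Definition Cinfinite_sum (f : nat -> C) (z : C) : Prop :=
  infinite_sum (fun n => Re (f n)) (Re z) /\ infinite_sum (fun n => Im (f n)) (Im z).

(* ---------- matrices: only entries with indices < d are meaningful ---------- *)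
Definition Mat := nat -> nat -> C.
Definition Mid : Mat := fun i j => if Nat.eqb i j then C1 else C0.
Definition Madd (A B : Mat) : Mat := fun i j => Cadd (A i j) (B i j).
Definition Mscale (c : R) (A : Mat) : Mat := fun i j => Cmul (RtoC c) (A i j).
Definition Mmul (d : nat) (A B : Mat) : Mat :=
  fun i j => Csum d (fun k => Cmul (A i k) (B k j)).
Definition Mtrace (d : nat) (A : Mat) : C := Csum d (fun i => A i i).

Definition Hermitian (d : nat) (A : Mat) : Prop :=
  forall i j, (i < d)%nat -> (j < d)%nat -> A i j = Cconj (A j i).

Definition PSD (d : nat) (A : Mat) : Prop :=
  Hermitian d A /\
  forall v : nat -> C,
    0 <= Re (Csum d (fun i => Cmul (Cconj (v i)) (Csum d (fun j => Cmul (A i j) (v j))))).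

Definition density (d : nat) (rho : Mat) : Prop := PSD d rho /\ Mtrace d rho = C1.

Definition POVM (d n : nat) (M : nat -> Mat) : Prop :=
  (forall k, (k < n)%nat -> PSD d (M k)) /\
  (forall i j, (i < d)%nat -> (j < d)%nat -> Csum n (fun k => M k i j) = Mid i j).

(* two-qubit conventions: basis index of |i>_A|j>_B is 2*i + j *)
Definition kron22 (A B : Mat) : Mat :=
  fun I J => Cmul (A (I / 2)%nat (J / 2)%nat) (B (I mod 2)%nat (J mod 2)%nat).
Definition ptraceB (rho : Mat) : Mat :=
  fun i k => Cadd (rho (2 * i)%nat (2 * k)%nat) (rho (2 * i + 1)%nat (2 * k + 1)%nat).
Definition ptraceA (rho : Mat) : Mat :=
  fun j l => Cadd (rho j l) (rho (2 + j)%nat (2 + l)%nat).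
(* partial transpose (id (x) T) in the computational basis *)
Definition ptranspose (M : Mat) : Mat :=
  fun I J => M (2 * (I / 2) + J mod 2)%nat (2 * (J / 2) + I mod 2)%nat.

Definition has_neg_eigenvalue (d : nat) (M : Mat) : Prop :=
  exists lam : R, lam < 0 /\
    exists v : nat -> C, (exists i, (i < d)%nat /\ v i <> C0) /\
      forall i, (i < d)%nat -> Csum d (fun j => Cmul (M i j) (v j)) = Cmul (RtoC lam) (v i).

Definition prob_dist (P : nat -> R) : Prop :=
  (forall l, 0 <= P l) /\ infinite_sum P 1.

(* response functions P(b | B, lambda), B = (nB, MB) a measurement *)
Definition response (p : nat -> (nat -> Mat) -> nat -> nat -> R) : Prop :=
  forall nB MB l, POVM 2 nB MB ->
    (forall b, (b < nB)%nat -> 0 <= p nB MB l b) /\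
    Csum nB (fun b => RtoC (p nB MB l b)) = C1.

(* NOT EPR steerable from Bob to Alice: LHS model with quantum states on Alice *)
Definition unsteerable_BtoA (rho : Mat) : Prop :=
  exists (P : nat -> R) (rhoA : nat -> Mat) (p : nat -> (nat -> Mat) -> nat -> nat -> R),
    prob_dist P /\ (forall l, density 2 (rhoA l)) /\ response p /\
    forall nA MA nB MB, POVM 2 nA MA -> POVM 2 nB MB ->
      forall a b, (a < nA)%nat -> (b < nB)%nat ->
        Cinfinite_sum
          (fun l => Cmul (RtoC (P l)) (Cmul (Mtrace 2 (Mmul 2 (rhoA l) (MA a))) (RtoC (p nB MB l b))))
          (Mtrace 4 (Mmul 4 (kron22 (MA a) (MB b)) rho)).

(* NOT EPR steerable from Alice to Bob: LHS model with quantum states on Bob *)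
Definition unsteerable_AtoB (rho : Mat) : Prop :=
  exists (P : nat -> R) (rhoB : nat -> Mat) (p : nat -> (nat -> Mat) -> nat -> nat -> R),
    prob_dist P /\ (forall l, density 2 (rhoB l)) /\ response p /\
    forall nA MA nB MB, POVM 2 nA MA -> POVM 2 nB MB ->
      forall a b, (a < nA)%nat -> (b < nB)%nat ->
        Cinfinite_sum
          (fun l => Cmul (RtoC (P l)) (Cmul (RtoC (p nA MA l a)) (Mtrace 2 (Mmul 2 (rhoB l) (MB b)))))
          (Mtrace 4 (Mmul 4 (kron22 (MA a) (MB b)) rho)).

Definition steerable_BtoA (rho : Mat) : Prop := ~ unsteerable_BtoA rho.
Definition steerable_AtoB (rho : Mat) : Prop := ~ unsteerable_AtoB rho.

(* Main.v *)
Require Import Defs.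
From Stdlib Require Import Reals Lra Psatz.
Open Scope R_scope.


Definition sgn (a:nat) : R := if Nat.eqb a 0 then 1 else -1.
Definition sig (i:nat) : Mat := fun r c =>
  match i with
  | 0%nat => Mid r c
  | 1%nat => match r, c with 0%nat,1%nat => Defs.C1 | 1%nat,0%nat => Defs.C1 | _,_ => Defs.C0 end
  | 2%nat => match r,c with 0%nat,1%nat => mkC 0 (-1) | 1%nat,0%nat => mkC 0 1 | _,_ => Defs.C0 end
  | _ => match r,c with 0%nat,0%nat => Defs.C1 | 1%nat,1%nat => mkC (-1) 0 | _,_ => Defs.C0 end end.
Definition sigT i : Mat := fun r c => sig i c r.
Definition form (d:nat) (M:Mat) (v:nat->Defs.C) : R :=
  Re (Csum d (fun i => Cmul (Cconj (v i)) (Csum d (fun j => Cmul (M i j) (v j))))).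
Definition qq v i j := form 4 (kron22 (sig i) (sigT j)) v.
Definition EE rho i j := Re (Mtrace 4 (Mmul 4 (kron22 (sig i) (sig j)) rho)).
Definition tau1 mu rho := Madd (Mscale mu rho) (Mscale (1-mu) (kron22 (ptraceB rho) (Mscale (1/2) Mid))).
Fixpoint rsum (n:nat) (f:nat -> R) : R := match n with O => 0 | S m => rsum m f + f m end.
Definition muj (mu:R) (j:nat) : R := if Nat.eqb j 0 then 1 else mu.

Lemma identA mu rho v : form 4 (ptranspose (tau1 mu rho)) v =
  1/4 * rsum 4 (fun i => rsum 4 (fun j => muj mu j * qq v i j * EE rho i j)).
Proof.
  unfold form, qq, EE, tau1, ptranspose, Madd, Mscale, kron22, ptraceB, Mtrace, Mmul, sig, sigT, Mid, muj.
  cbn. field.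
Qed.


Definition Pi (i a : nat) : Mat := fun r c =>
  Cmul (RtoC (1/2)) (Cadd (Mid r c) (Cmul (RtoC (sgn a)) (sig i r c))).
Definition hi (i:nat) : nat := if Nat.eqb i 0 then 3%nat else i.
Definition ss (i a:nat) : R := if Nat.eqb i 0 then 1 else sgn a.
Definition TT rho i a j b := Re (Mtrace 4 (Mmul 4 (kron22 (Pi (hi i) a) (Pi (hi j) b)) rho)).



Lemma Ceq (z w : Defs.C) : Re z = Re w -> Im z = Im w -> z = w.
Proof. destruct z, w; cbn; intros; subst; reflexivity. Qed.

Lemma Pi_POVM k : (1 <= k <= 3)%nat -> POVM 2 2 (Pi k).
Proof.
  intros Hk. split.
  - intros a Ha. split.
    + intros i j Hi Hj.
      destruct k as [|[|[|[|k]]]]; try lia;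
      destruct a as [|[|a]]; try lia;
      destruct i as [|[|i]]; try lia;
      destruct j as [|[|j]]; try lia;
      unfold Pi, sig, sgn, Mid, Cconj; apply Ceq; cbn; field.
    + intros w.
      destruct k as [|[|[|[|k]]]]; try lia;
      destruct a as [|[|a]]; try lia;
      unfold Pi, sig, sgn, Mid, Cconj; cbn;
      destruct (w 0%nat) as [x0 y0]; destruct (w 1%nat) as [x1 y1]; cbn;
      pose proof (pow2_ge_0 (x0+x1)); pose proof (pow2_ge_0 (x0-x1));
      pose proof (pow2_ge_0 (y0+y1)); pose proof (pow2_ge_0 (y0-y1));
      pose proof (pow2_ge_0 (x0+y1)); pose proof (pow2_ge_0 (x0-y1));
      pose proof (pow2_ge_0 (y0+x1)); pose proof (pow2_ge_0 (y0-x1));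
      pose proof (pow2_ge_0 x0); pose proof (pow2_ge_0 x1);
      pose proof (pow2_ge_0 y0); pose proof (pow2_ge_0 y1); lra.
  - intros i j Hi Hj.
      destruct k as [|[|[|[|k]]]]; try lia;
      destruct i as [|[|i]]; try lia;
      destruct j as [|[|j]]; try lia;
      unfold Pi, sig, sgn, Mid; apply Ceq; cbn; field.
Qed.

Lemma pauli_exp rho i j : (i < 4)%nat -> (j < 4)%nat ->
  rsum 2 (fun a => rsum 2 (fun b => ss i a * ss j b * TT rho i a j b)) = EE rho i j.
Proof.
  intros Hi Hj.
  destruct i as [|[|[|[|i]]]]; try lia;
  destruct j as [|[|[|[|j]]]]; try lia;
  unfold TT, EE, Pi, hi, ss, sgn, Mtrace, Mmul, kron22, sig, Mid; cbn; field.
Qed.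


Lemma inf_ext f g l : (forall n, f n = g n) -> infinite_sum f l -> infinite_sum g l.
Proof.
  intros H Hf. change (Un_cv (sum_f_R0 g) l).
  apply Un_cv_ext with (sum_f_R0 f); [|exact Hf].
  intro n. induction n; cbn; rewrite ?IHn, H; reflexivity.
Qed.

Lemma inf_scal c f l : infinite_sum f l -> infinite_sum (fun n => c * f n) (c * l).
Proof.
  intros Hf. change (Un_cv (sum_f_R0 (fun n => c * f n)) (c*l)).
  apply Un_cv_ext with (fun n => c * sum_f_R0 f n).
  - intro n. rewrite scal_sum. apply sum_eq. intros; ring.
  - apply CV_mult; [|exact Hf]. intros e He. exists 0%nat. intros. unfold Rdist.
    rewrite Rminus_diag, Rabs_R0. lra.
Qed.

Lemma inf_plus f g l1 l2 : infinite_sum f l1 -> infinite_sum g l2 ->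
  infinite_sum (fun n => f n + g n) (l1 + l2).
Proof.
  intros Hf Hg. change (Un_cv (sum_f_R0 (fun n => f n + g n)) (l1+l2)).
  apply Un_cv_ext with (fun n => sum_f_R0 f n + sum_f_R0 g n).
  - intro n. rewrite sum_plus. reflexivity.
  - apply CV_plus; assumption.
Qed.

Lemma inf_zero : infinite_sum (fun _ => 0) 0.
Proof.
  intros e He. exists 0%nat. intros n _. unfold Rdist.
  replace (sum_f_R0 (fun _ => 0) n) with 0.
  - rewrite Rminus_diag, Rabs_R0. lra.
  - induction n; cbn; [reflexivity|rewrite <- IHn; ring].
Qed.

Lemma inf_rsum n (F : nat -> nat -> R) (L : nat -> R) :
  (forall i, (i < n)%nat -> infinite_sum (F i) (L i)) ->
  infinite_sum (fun l => rsum n (fun i => F i l)) (rsum n L).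
Proof.
  induction n as [|n IH]; intros H; cbn.
  - exact inf_zero.
  - apply inf_plus; [apply IH; intros; apply H; lia | apply H; lia].
Qed.

Lemma inf_nonneg f l : (forall n, 0 <= f n) -> infinite_sum f l -> 0 <= l.
Proof.
  intros Hp Hf. apply Rle_cv_lim with (Un := fun _ => 0) (Vn := sum_f_R0 f).
  - intros; apply cond_pos_sum; assumption.
  - intros e He; exists 0%nat; intros; unfold Rdist; rewrite Rminus_diag, Rabs_R0; lra.
  - exact Hf.
Qed.


Definition Bm (m00 m11 mr mi : R) : Mat := fun r c =>
  match r, c with
  | 0%nat, 0%nat => RtoC m00 | 0%nat, 1%nat => mkC mr mi
  | 1%nat, 0%nat => mkC mr (-mi) | 1%nat, 1%nat => RtoC m11 | _, _ => Defs.C0 end.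
Definition Phi r v m00 m11 mr mi := form 4 (kron22 r (Bm m00 m11 mr mi)) v.

Lemma Phi_add r v a b c d a' b' c' d' :
  Phi r v (a+a') (b+b') (c+c') (d+d') = Phi r v a b c d + Phi r v a' b' c' d'.
Proof. unfold Phi, form, kron22, Bm; cbn. ring. Qed.

Definition yv (w v : nat -> Defs.C) : nat -> Defs.C :=
  fun i => Csum 2 (fun j => Cmul (Cconj (w j)) (v (2*i+j)%nat)).

Lemma Phi_rank1 r v w :
  Phi r v (Re (w 0%nat) * Re (w 0%nat) + Im (w 0%nat) * Im (w 0%nat))
          (Re (w 1%nat) * Re (w 1%nat) + Im (w 1%nat) * Im (w 1%nat))
          (Re (w 0%nat) * Re (w 1%nat) + Im (w 0%nat) * Im (w 1%nat))
          (Im (w 0%nat) * Re (w 1%nat) - Re (w 0%nat) * Im (w 1%nat))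
  = form 2 r (yv w v).
Proof. unfold Phi, form, kron22, Bm, yv; cbn. ring. Qed.

Definition fexpr (mu : R) (v : nat -> Defs.C) (r : Mat) (pi : nat -> nat -> R) : R :=
  1/4 * rsum 4 (fun i => rsum 4 (fun j => muj mu j * qq v i j *
     rsum 2 (fun a => rsum 2 (fun b => ss i a * ss j b *
        (Re (Mtrace 2 (Mmul 2 r (Pi (hi i) a))) * pi (hi j) b))))).

Lemma f_Phi mu v r pi :
  r 1%nat 0%nat = Cconj (r 0%nat 1%nat) -> Im (r 0%nat 0%nat) = 0 -> Im (r 1%nat 1%nat) = 0 ->
  pi 3%nat 1%nat = 1 - pi 3%nat 0%nat ->
  fexpr mu v r pi = Phi r v ((1 + mu * (pi 3%nat 0%nat - pi 3%nat 1%nat))/2)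
                            ((1 - mu * (pi 3%nat 0%nat - pi 3%nat 1%nat))/2)
                            (mu * (pi 1%nat 0%nat - pi 1%nat 1%nat)/2)
                            (mu * (pi 2%nat 0%nat - pi 2%nat 1%nat)/2).
Proof.
  intros H10 H00 H11 Hp.
  unfold fexpr, Phi, qq, form, kron22, Bm, Pi, hi, ss, sgn, muj, Mtrace, Mmul, sig, sigT, Mid.
  cbn. rewrite H10. cbn. rewrite H00, H11, Hp. field.
Qed.


Arguments Phi : simpl never.
Arguments form : simpl never.
Arguments yv : simpl never.

Lemma sq_bound mu x y : 0 <= x -> 0 <= y -> x + y = 1 ->
  (mu * (x - y)) * (mu * (x - y)) <= mu * mu.
Proof.
  intros. assert (Hd : (x - y) * (x - y) <= 1) by nra.
  assert (0 <= mu * mu) by nra.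
  replace ((mu * (x - y)) * (mu * (x - y))) with ((mu*mu) * ((x-y)*(x-y))) by ring. nra.
Qed.

Lemma fpos mu v r pi : density 2 r ->
  (forall k, (1 <= k <= 3)%nat -> 0 <= pi k 0%nat /\ 0 <= pi k 1%nat /\ pi k 0%nat + pi k 1%nat = 1) ->
  0 <= mu -> 3 * (mu * mu) <= 1 -> 0 <= fexpr mu v r pi.
Proof.
  intros [[Hh Hpsd] _] Hpi Hmu Hmu3.
  assert (H10 : r 1%nat 0%nat = Cconj (r 0%nat 1%nat)) by (apply Hh; lia).
  assert (H00 : Im (r 0%nat 0%nat) = 0).
  { pose proof (Hh 0%nat 0%nat ltac:(lia) ltac:(lia)) as E.
    destruct (r 0%nat 0%nat) as [x y]; cbn in *. injection E; lra. }
  assert (H11 : Im (r 1%nat 1%nat) = 0).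
  { pose proof (Hh 1%nat 1%nat ltac:(lia) ltac:(lia)) as E.
    destruct (r 1%nat 1%nat) as [x y]; cbn in *. injection E; lra. }
  destruct (Hpi 1%nat ltac:(lia)) as [a0 [a1 Ha]].
  destruct (Hpi 2%nat ltac:(lia)) as [b0 [b1 Hb]].
  destruct (Hpi 3%nat ltac:(lia)) as [c0 [c1 Hc]].
  rewrite f_Phi; [|assumption|assumption|assumption|lra].
  set (m1 := mu * (pi 1%nat 0%nat - pi 1%nat 1%nat)).
  set (m2 := mu * (pi 2%nat 0%nat - pi 2%nat 1%nat)).
  set (m3 := mu * (pi 3%nat 0%nat - pi 3%nat 1%nat)).
  assert (Hm1 : m1 * m1 <= mu * mu) by (unfold m1; apply sq_bound; lra).
  assert (Hm2 : m2 * m2 <= mu * mu) by (unfold m2; apply sq_bound; lra).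
  assert (Hm3 : m3 * m3 <= mu * mu) by (unfold m3; apply sq_bound; lra).
  assert (Hmu1 : mu < 1) by nra.
  assert (Hm3p : 0 < 1 + m3).
  { unfold m3. assert (0 <= mu * (pi 3%nat 0%nat - pi 3%nat 1%nat + 1)) by (apply Rmult_le_pos; lra). nra. }
  set (s1 := sqrt ((1 + m3)/2)).
  assert (Hs1 : s1 * s1 = (1 + m3)/2) by (apply sqrt_sqrt; lra).
  assert (Hs1p : 0 < s1) by (apply sqrt_lt_R0; lra).
  set (D := (1 - m3)/2 - (m1*m1 + m2*m2)/(2*(1+m3))).
  assert (HD : 0 <= D).
  { unfold D.
    replace ((1 - m3)/2 - (m1*m1 + m2*m2)/(2*(1+m3))) with
      (((1-m3)*(1+m3) - (m1*m1+m2*m2)) * / (2*(1+m3))) by (field; lra).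
    apply Rmult_le_pos; [nra | left; apply Rinv_0_lt_compat; lra]. }
  set (s2 := sqrt D).
  assert (Hs2 : s2 * s2 = D) by (apply sqrt_sqrt; lra).
  set (w1 := fun i : nat => if Nat.eqb i 0 then mkC s1 0 else mkC (m1/2/s1) (-(m2/2/s1))).
  set (w2 := fun i : nat => if Nat.eqb i 0 then mkC 0 0 else mkC s2 0).
  pose proof (Phi_rank1 r v w1) as E1. pose proof (Phi_rank1 r v w2) as E2.
  pose proof (Hpsd (yv w1 v)) as P1. pose proof (Hpsd (yv w2 v)) as P2.
  change (0 <= form 2 r (yv w1 v)) in P1. change (0 <= form 2 r (yv w2 v)) in P2.
  rewrite <- E1 in P1. rewrite <- E2 in P2.
  unfold w1, w2 in P1, P2; cbn in P1, P2.
  pose proof (Phi_add r v (s1 * s1 + 0 * 0) (m1 / 2 / s1 * (m1 / 2 / s1) + - (m2 / 2 / s1) * - (m2 / 2 / s1))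
     (s1 * (m1 / 2 / s1) + 0 * - (m2 / 2 / s1)) (0 * (m1 / 2 / s1) - s1 * - (m2 / 2 / s1))
     (0 * 0 + 0 * 0) (s2 * s2 + 0 * 0) (0 * s2 + 0 * 0) (0 * s2 - 0 * 0)) as EA.
  replace (Phi r v ((1 + m3) / 2) ((1 - m3) / 2) (m1 / 2) (m2 / 2)) with
    (Phi r v (s1 * s1 + 0 * 0 + (0 * 0 + 0 * 0))
       (m1 / 2 / s1 * (m1 / 2 / s1) + - (m2 / 2 / s1) * - (m2 / 2 / s1) + (s2 * s2 + 0 * 0))
       (s1 * (m1 / 2 / s1) + 0 * - (m2 / 2 / s1) + (0 * s2 + 0 * 0))
       (0 * (m1 / 2 / s1) - s1 * - (m2 / 2 / s1) + (0 * s2 - 0 * 0))).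
  - rewrite EA. lra.
  - f_equal.
    + rewrite Hs1; ring.
    + rewrite Hs2; unfold D.
      replace (m1/2/s1*(m1/2/s1) + -(m2/2/s1)* -(m2/2/s1)) with ((m1*m1+m2*m2)/(4*(s1*s1))) by (field; lra).
      rewrite Hs1. field; lra.
    + field; lra.
    + field; lra.
Qed.


Lemma rsum_ext n f g : (forall i, (i < n)%nat -> f i = g i) -> rsum n f = rsum n g.
Proof. induction n; intros H; cbn; [reflexivity|]. rewrite IHn, H; [reflexivity|lia|intros; apply H; lia]. Qed.

Lemma hi_range i : (i < 4)%nat -> (1 <= hi i <= 3)%nat.
Proof. intros. destruct i as [|[|[|[|i]]]]; cbn; lia. Qed.

Lemma core rho mu : unsteerable_BtoA rho -> 0 <= mu -> 3 * (mu * mu) <= 1 ->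
  forall v, 0 <= form 4 (ptranspose (tau1 mu rho)) v.
Proof.
  intros (P & rhoA & p & [HP0 HP1] & Hrho & Hresp & Hmodel) Hmu Hmu3 v.
  rewrite identA.
  rewrite (rsum_ext 4 _ (fun i => rsum 4 (fun j => muj mu j * qq v i j *
     rsum 2 (fun a => rsum 2 (fun b => ss i a * ss j b * TT rho i a j b))))).
  2:{ intros i Hi. apply rsum_ext. intros j Hj. rewrite pauli_exp; auto. }
  apply inf_nonneg with (fun l => P l * fexpr mu v (rhoA l) (fun k b => p 2%nat (Pi k) l b)).
  - intros l. apply Rmult_le_pos; [apply HP0|]. apply fpos; auto.
    intros k Hk. destruct (Hresp 2%nat (Pi k) l (Pi_POVM k Hk)) as [H1 H2].
    split; [apply H1; lia|]. split; [apply H1; lia|].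
    apply (f_equal Re) in H2. cbn in H2. lra.
  - apply inf_ext with (fun l => 1/4 * rsum 4 (fun i => rsum 4 (fun j => muj mu j * qq v i j *
       rsum 2 (fun a => rsum 2 (fun b => ss i a * ss j b *
         (P l * (Re (Mtrace 2 (Mmul 2 (rhoA l) (Pi (hi i) a))) * p 2%nat (Pi (hi j)) l b))))))).
    { intros l. unfold fexpr. cbn [rsum]. ring. }
    apply inf_scal. apply inf_rsum. intros i Hi. apply inf_rsum. intros j Hj.
    apply inf_scal. apply inf_rsum. intros a Ha. apply inf_rsum. intros b Hb.
    apply inf_scal.
    destruct a as [|[|a]]; [| |lia]; destruct b as [|[|b]]; try lia;
    (destruct (Hmodel 2%nat (Pi (hi i)) 2%nat (Pi (hi j)) (Pi_POVM _ (hi_range i Hi))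
        (Pi_POVM _ (hi_range j Hj)) _ _ Ha Hb) as [HR _];
     unfold TT; eapply inf_ext; [|exact HR]; intros l; cbn [Re Im Cmul RtoC]; ring).
Qed.


Lemma Csum_ext n f g : (forall i, (i < n)%nat -> f i = g i) -> Csum n f = Csum n g.
Proof. induction n; intros H; cbn; [reflexivity|]. rewrite IHn, H; [reflexivity|lia|intros; apply H; lia]. Qed.

Lemma nz_pos (z : Defs.C) : z <> Defs.C0 -> 0 < Re z * Re z + Im z * Im z.
Proof.
  destruct z as [x y]; cbn; intros H.
  destruct (Req_dec x 0) as [->|Hx]; destruct (Req_dec y 0) as [->|Hy].
  - exfalso; apply H; reflexivity.
  - assert (0 < y*y) by (apply Rsqr_pos_lt; exact Hy). lra.
  - assert (0 < x*x) by (apply Rsqr_pos_lt; exact Hx). lra.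
  - assert (0 < x*x) by (apply Rsqr_pos_lt; exact Hx). nra.
Qed.

Lemma neg_form M : has_neg_eigenvalue 4 M -> exists v, form 4 M v < 0.
Proof.
  intros (lam & Hl & v & [i [Hi Hv]] & Heig). exists v.
  assert (E : form 4 M v = lam * (rsum 4 (fun k => Re (v k) * Re (v k) + Im (v k) * Im (v k)))).
  { unfold form. rewrite (Csum_ext 4 _ (fun k => Cmul (Cconj (v k)) (Cmul (RtoC lam) (v k)))).
    - cbn. ring.
    - intros k Hk. rewrite Heig; auto. }
  rewrite E.
  assert (HS : 0 < rsum 4 (fun k => Re (v k) * Re (v k) + Im (v k) * Im (v k))).
  { pose proof (nz_pos _ Hv) as Hp. cbn.
    pose proof (Rle_0_sqr (Re (v 0%nat))); pose proof (Rle_0_sqr (Im (v 0%nat)));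
    pose proof (Rle_0_sqr (Re (v 1%nat))); pose proof (Rle_0_sqr (Im (v 1%nat)));
    pose proof (Rle_0_sqr (Re (v 2%nat))); pose proof (Rle_0_sqr (Im (v 2%nat)));
    pose proof (Rle_0_sqr (Re (v 3%nat))); pose proof (Rle_0_sqr (Im (v 3%nat))).
    unfold Rsqr in *.
    destruct i as [|[|[|[|i]]]]; try lia; lra. }
  nra.
Qed.

Definition sw (I : nat) : nat := (2 * (I mod 2) + I / 2)%nat.
Definition swapM (rho : Mat) : Mat := fun I J => rho (sw I) (sw J).

Lemma tr_swap X Y rho : Mtrace 4 (Mmul 4 (kron22 X Y) (swapM rho)) = Mtrace 4 (Mmul 4 (kron22 Y X) rho).
Proof. apply Ceq; unfold Mtrace, Mmul, kron22, swapM, sw; cbn; ring. Qed.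

Lemma swap_unst rho : unsteerable_AtoB rho -> unsteerable_BtoA (swapM rho).
Proof.
  intros (P & rhoB & p & HP & Hr & Hresp & Hm). exists P, rhoB, p.
  split; [exact HP|]. split; [exact Hr|]. split; [exact Hresp|].
  intros nA MA nB MB HA HB a b Ha Hb.
  destruct (Hm nB MB nA MA HB HA b a Hb Ha) as [H1 H2].
  rewrite tr_swap. split.
  - eapply inf_ext; [|exact H1]. intros l. cbn [Re Im Cmul RtoC]. ring.
  - eapply inf_ext; [|exact H2]. intros l. cbn [Re Im Cmul RtoC]. ring.
Qed.

Definition tau2 mu rho := Madd (Mscale mu rho) (Mscale (1-mu) (kron22 (Mscale (1/2) Mid) (ptraceA rho))).

Lemma form_swap mu rho v :
  form 4 (ptranspose (tau2 mu rho)) v =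
  form 4 (ptranspose (tau1 mu (swapM rho))) (fun I => Cconj (v (sw I))).
Proof.
  unfold form, tau1, tau2, ptranspose, Madd, Mscale, kron22, ptraceA, ptraceB, swapM, sw, Mid.
  cbn. field.
Qed.

Lemma mu_bound mu : 0 <= mu <= 1 / sqrt 3 -> 3 * (mu * mu) <= 1.
Proof.
  intros [H0 H1].
  assert (Hs : 0 < sqrt 3) by (apply sqrt_lt_R0; lra).
  assert (H2 : mu * sqrt 3 <= 1).
  { apply Rmult_le_compat_r with (r := sqrt 3) in H1; [|lra].
    replace (1 / sqrt 3 * sqrt 3) with 1 in H1 by (field; lra). exact H1. }
  assert (H3 : sqrt 3 * sqrt 3 = 3) by (apply sqrt_sqrt; lra).
  assert (0 <= mu * sqrt 3) by nra.
  replace (3 * (mu * mu)) with ((mu * sqrt 3) * (mu * sqrt 3)) by (transitivity (sqrt 3 * sqrt 3 * (mu*mu)); [ring | rewrite H3; ring]).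
  nra.
Qed.

Theorem mainTheorem2 (rho : Mat) (mu1 mu2 : R) :
  density 4 rho ->
  0 <= mu1 <= 1 / sqrt 3 ->
  0 <= mu2 <= 1 / sqrt 3 ->
  (has_neg_eigenvalue 4
     (ptranspose (Madd (Mscale mu1 rho)
                       (Mscale (1 - mu1) (kron22 (ptraceB rho) (Mscale (1/2) Mid))))) ->
   steerable_BtoA rho) /\
  (has_neg_eigenvalue 4
     (ptranspose (Madd (Mscale mu2 rho)
                       (Mscale (1 - mu2) (kron22 (Mscale (1/2) Mid) (ptraceA rho))))) ->
   steerable_AtoB rho).
Proof.
  intros _ Hm1 Hm2. split.
  - intros Hneg Hun. destruct (neg_form _ Hneg) as [v Hv].
    pose proof (core rho mu1 Hun (proj1 Hm1) (mu_bound _ Hm1) v) as Hc.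
    unfold tau1 in Hc. lra.
  - intros Hneg Hun. destruct (neg_form _ Hneg) as [v Hv].
    change (form 4 (ptranspose (tau2 mu2 rho)) v < 0) in Hv.
    rewrite form_swap in Hv.
    pose proof (core (swapM rho) mu2 (swap_unst rho Hun) (proj1 Hm2) (mu_bound _ Hm2)
      (fun I => Cconj (v (sw I)))) as Hc. lra.
Qed.
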